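(* With $\theta$ and $\widehat\Theta$ as in the context, $(X_\theta,S)$ is a topological factor of $(X_{\widehat\Theta},S)$, i.e. there is a continuous surjection $\pi:X_{\widehat\Theta}\to X_\theta$ with $\pi\circ S=S\circ\pi$.
   Context: For a primitive substitution $\zeta$ over an alphabet $\mathbb{B}$, $X_\zeta\subset\mathbb{B}^{\mathbb{Z}}$ is the set of sequences all of whose finite blocks occur in some iterate $\zeta^k(b)$, and $S$ is the left shift. Let $\theta:\mathbb{A}\to\mathbb{A}^\lambda$ ($\lambda\ge2$) be primitive, injective on letters, with infinite subshift, $c=c(\theta)=\min_{k\ge1,0\le j<\lambda^k}|\{\theta^k(a)_j:a\in\mathbb{A}\}|$. Let $\mathcal{X}$ be the set of $M\subset\mathbb{A}$ with $|M|=c$ and $M=\{\theta^k(a)_j:a\in\mathbb{A}\}$ for some $k\ge1$, $j<\lambda^k$; $\widetilde\theta(M)_j:=\{\theta(a)_j:a\in M\}\in\mathcal{X}$, and $a\mapsto\theta(a)_j$ is a bijection $M\to\widetilde\theta(M)_j$. Assume (after passing to a power) $a_0\in M_0\in\mathcal{X}$ with $\theta(a_0)_0=a_0$, $\widetilde\theta(M_0)_0=M_0$. Fix a total order on $M_0$ with minimum $a_0$, and $k_0\ge1$, $j_0<\lambda^{k_0}$ with $\theta^{k_0}(a)_{j_0}=a$ ($a\in M_0$) and $\widetilde\theta^{k_0}(M)_{j_0}=M_0$ ($M\in\mathcal{X}$). Order each $M$ by $a<b$ iff $\theta^{k_0}(a)_{j_0}<\theta^{k_0}(b)_{j_0}$;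 $e_M(i)$ is the $(i+1)$-th smallest element of $M$. $\widetilde\Theta(i,M)_j=(i',\widetilde\theta(M)_j)$ where $\theta(e_M(i))_j=e_{\widetilde\theta(M)_j}(i')$; $\sigma_{M,j}\in\mathcal{S}_c$ is defined by $\sigma_{M,j}(m)=n$ iff $\widetilde\Theta(n,M)_j=(m,\widetilde\theta(M)_j)$; $G=\langle\sigma_{M,j}\rangle\le\mathcal{S}_c$; $\widehat\Theta:G\times\mathcal{X}\to(G\times\mathcal{X})^\lambda$, $\widehat\Theta(\sigma,M)_j=(\sigma\circ\sigma_{M,j},\widetilde\theta(M)_j)$ (a primitive substitution). *)

(* Defs.v *)
From HB Require Import structures.
From mathcomp Require Import all_boot all_order all_algebra all_fingroup.
From Stdlib Require Import ClassicalEpsilon.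
From Stdlib Require List.
Set Implicit Arguments. Unset Strict Implicit. Unset Printing Implicit Defensive.
Import GRing.Theory Num.Theory.

Definition sapp (B : Type) (z : B -> seq B) (w : seq B) : seq B := flatten (map z w).
Definition spow (B : Type) (z : B -> seq B) (k : nat) (w : seq B) : seq B := iter k (sapp z) w.

Definition block (B : Type) (x : int -> B) (i : int) (n : nat) : seq B :=
  [seq x (i + (k%:Z))%R | k <- iota 0 n].

(* X_z over the alphabet D (a predicate on B): all finite blocks occur in some z^k(b), b in D *)
Definition Xsub (B : eqType) (z : B -> seq B) (D : B -> Prop) (x : int -> B) : Prop :=
  forall (i : int) (n : nat), exists b k, D b /\ infix (block x i n) (spow z k [:: b]).

Definition Xsubst (B : eqType) (z : B -> seq B) := Xsub z (fun _ => True).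

Definition shift (B : Type) (x : int -> B) : int -> B := fun n => x (n + 1)%R.

Definition primitive (B : finType) (z : B -> seq B) : Prop :=
  exists k, 0 < k /\ forall a b : B, b \in spow z k [:: a].

Definition infinite_set (T : Type) (P : T -> Prop) : Prop :=
  ~ exists l : list T, forall x, P x -> List.In x l.

Definition continuous_on (B C : Type) (P : (int -> B) -> Prop) (f : (int -> B) -> int -> C) :=
  forall x, P x -> forall n : int, exists N : nat,
    forall y, P y -> (forall m : int, (absz m <= N)%N -> y m = x m) -> f y n = f x n.

Definition top_factor (B C : Type) (X : (int -> B) -> Prop) (Y : (int -> C) -> Prop) : Prop :=
  exists pi : (int -> B) -> int -> C,
    [/\ forall x, X x -> Y (pi x),
        forall y, Y y -> exists2 x, X x & pi x =1 y,
        forall x, X x -> pi (shift x) =1 shift (pi x)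
      & continuous_on X pi].

Definition pb (P : Prop) : bool := if excluded_middle_informative P then true else false.

Section Construction.
Variables (A : finType) (theta : A -> seq A) (lam c : nat).

Definition thpow (k j : nat) (a : A) : A := nth a (spow theta k [:: a]) j.

Definition colset (k j : nat) : {set A} := [set thpow k j a | a in A].

Definition is_c_theta : Prop :=
  (exists k j, 0 < k /\ j < lam ^ k /\ #|colset k j| = c) /\
  (forall k j, 0 < k -> j < lam ^ k -> c <= #|colset k j|).

Definition isX (M : {set A}) : Prop :=
  #|M| = c /\ exists k j, 0 < k /\ j < lam ^ k /\ M = colset k j.

Definition Xset : {set {set A}} := [set M | pb (isX M)].

Definition thetil_j (M : {set A}) (j : nat) : {set A} := [set nth a (theta a) j | a in M].
Definition thetil (M : {set A}) : seq {set A} := [seq thetil_j M j | j <- iota 0 lam].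

Variables (a0 : A) (s0 : seq A) (k0 j0 : nat).
(* s0 lists M0 in increasing order; the order on each M: a < b iff
   theta^k0(a)_j0 < theta^k0(b)_j0 (in the order of M0) *)
Definition key (a : A) : nat := index (thpow k0 j0 a) s0.
Definition sortM (M : {set A}) : seq A := sort (fun a b => key a <= key b) (enum M).
Definition e_ (M : {set A}) (i : nat) : A := nth a0 (sortM M) i.

(* first component of tilde Theta(n,M)_j *)
Definition tau (M : {set A}) (j : nat) (n : 'I_c) : 'I_c :=
  insubd n (index (nth (e_ M n) (theta (e_ M n)) j) (sortM (thetil_j M j))).

Definition sigma (M : {set A}) (j : nat) : {perm 'I_c} :=
  odflt 1%g [pick s : {perm 'I_c} | [forall m, forall n, (s m == n) == (tau M j n == m)]].

Definition Ggrp : {set {perm 'I_c}} :=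
  <<[set sigma M (nat_of_ord j) | M in Xset, j in 'I_lam]>>%g.

(* widehat Theta(s,M)_j = (s o sigma_{M,j}, tilde theta(M)_j);
   note (t * s) x = s (t x) for permutations in mathcomp *)
Definition ThetaHat (b : {perm 'I_c} * {set A}) : seq ({perm 'I_c} * {set A}) :=
  [seq ((sigma b.2 j * b.1)%g, thetil_j b.2 j) | j <- iota 0 lam].

Definition hatAlph (b : {perm 'I_c} * {set A}) : Prop := b.1 \in Ggrp /\ isX b.2.

End Construction.

(* Main.v *)
Require Import Defs.
From mathcomp Require Import all_boot all_order all_algebra all_fingroup.
From mathcomp Require Import zify.
From Stdlib Require Import ClassicalEpsilon Classical.
Lemma sapp_cat (B : Type) (z : B -> seq B) u v :
  sapp z (u ++ v) = sapp z u ++ sapp z v.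
Proof. by rewrite /sapp map_cat flatten_cat. Qed.

Lemma spow_cat (B : Type) (z : B -> seq B) k u v :
  spow z k (u ++ v) = spow z k u ++ spow z k v.
Proof. by elim: k => //= k IH; rewrite /spow /= -/(spow z k _) IH sapp_cat. Qed.

Lemma infix_map (T U : eqType) (f : T -> U) u v :
  infix u v -> infix (map f u) (map f v).
Proof.
move/infixP=> [s [s' ->]]; apply/infixP; exists (map f s), (map f s').
by rewrite !map_cat.
Qed.

Lemma infix_map_inv (T U : eqType) (f : T -> U) u W :
  infix u (map f W) -> exists2 W', infix W' W & map f W' = u.
Proof.
move/infixP=> [s [s' E]].
exists (take (size u) (drop (size s) W)).
  by apply: infix_trans (infix_take _ _) (infix_drop _ _).
rewrite map_take map_drop E drop_cat ltnn subnn drop0 take_cat ltnn subnn.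
by rewrite take0 cats0.
Qed.

Lemma infix_spow_mem (B : eqType) (z : B -> seq B) k a w :
  a \in w -> infix (spow z k [:: a]) (spow z k w).
Proof.
case/splitPr=> p1 p2; rewrite spow_cat (_ : a :: p2 = [:: a] ++ p2) // spow_cat.
exact: infix_infix.
Qed.

Lemma size_sapp (B : Type) (z : B -> seq B) lam w :
  (forall a, size (z a) = lam) -> size (sapp z w) = lam * size w.
Proof.
move=> Hz; elim: w => [|a w IH]; first by rewrite /sapp /= muln0.
by rewrite /sapp /= size_cat -/(sapp z w) IH Hz mulnS.
Qed.

Lemma size_spow (B : Type) (z : B -> seq B) lam k w :
  (forall a, size (z a) = lam) -> size (spow z k w) = lam ^ k * size w.
Proof.
move=> Hz; elim: k => [|k IH]; first by rewrite mul1n.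
by rewrite /spow iterS -/(spow z k w) (@size_sapp _ _ lam _ Hz) IH expnS mulnA.
Qed.

Lemma nth_sapp (B : Type) (z : B -> seq B) lam w d i j :
  (forall a, size (z a) = lam) -> j < lam -> i < size w ->
  nth d (sapp z w) (i * lam + j) = nth d (z (nth d w i)) j.
Proof.
move=> Hz hj; elim: w i => [|a w IH] [|i] //= hi.
  by rewrite /sapp /= nth_cat Hz hj.
rewrite /sapp /= nth_cat Hz -/(sapp z w) mulSn -addnA ltnNge leq_addr /=.
by rewrite addKn IH.
Qed.
Set Implicit Arguments. Unset Strict Implicit. Unset Printing Implicit Defensive.
Lemma fin_max (F : finType) (Q : F -> nat -> Prop) :
  (forall f m m', m <= m' -> Q f m -> Q f m') ->
  (forall f, exists m, Q f m) -> exists M, forall f, Q f M.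
Proof.
move=> Hup Hex.
suff [M HM]: exists M, forall f, f \in enum F -> Q f M.
  by exists M => f; apply: HM; rewrite mem_enum.
elim: (enum F) => [|f l [M1 IH]]; first by exists 0.
have [m Hm] := Hex f; exists (maxn m M1) => g; rewrite inE => /orP [/eqP->|gl].
  by apply: Hup Hm; apply: leq_maxl.
by apply: Hup (IH _ gl); apply: leq_maxr.
Qed.

Definition agree (T : Type) (n : nat) (x y : int -> T) :=
  forall i : int, (absz i < n)%N -> x i = y i.

Definition win (T : finType) (n : nat) (x : int -> T) : {ffun 'I_(n.*2.+1) -> T} :=
  [ffun k : 'I_(n.*2.+1) => x ((k : nat)%:Z - n%:Z)%R].

Lemma win_agree (T : finType) (n : nat) (x y : int -> T) :
  win n x = win n y -> agree n.+1 x y.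
Proof.
move=> E i hi.
have hk : (absz (i + n%:Z)%R < n.*2.+1)%N by lia.
have := congr1 (fun f : {ffun _ -> T} => f (Ordinal hk)) E; rewrite !ffunE /=.
have -> : ((absz (i + n%:Z)%R)%:Z - n%:Z)%R = i by lia.
by [].
Qed.

Lemma konig (T : finType) (R : nat -> (int -> T) -> Prop) :
  (forall m x x', agree m x x' -> R m x -> R m x') ->
  (forall m m' x, m <= m' -> R m' x -> R m x) ->
  (forall m, exists x, R m x) ->
  exists x, forall m, R m x.
Proof.
move=> Hw Hdn Hex.
pose good n x := forall m, exists x', agree n x x' /\ R m x'.
have step : forall n x, good n x -> exists x1, agree n x x1 /\ good n.+1 x1.
  move=> n x gx; apply: NNPP => Hno.
  pose Q (phi : {ffun 'I_(n.*2.+1) -> T}) m :=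
    forall x', win n x' = phi -> agree n x x' -> ~ R m x'.
  have [M HM] : exists M, forall f, Q f M.
    apply: fin_max.
  - move=> phi m m' hm Hq x' e a Rx; exact: (Hq x' e a (Hdn _ _ _ hm Rx)).
  - move=> phi.
    case: (classic (exists x1, win n x1 = phi /\ agree n x x1)) => [[x1 [e1 a1]]|nex].
      have ng : ~ good n.+1 x1 by move=> g; apply: Hno; exists x1.
      have [m Hm] := not_all_ex_not _ _ ng.
      exists m => x' e a Rx; apply: Hm; exists x'; split=> //.
      by apply: win_agree; rewrite e e1.
    by exists 0 => x' e a _; apply: nex; exists x'.
  have [x' [a Rx]] := gx M.
  exact: (HM _ x' erefl a Rx).
have step' : forall n x, exists x1, good n x -> agree n x x1 /\ good n.+1 x1.
  move=> n x; case: (classic (good n x)) => [g|ng].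
    by have [x1 H] := step n x g; exists x1.
  by exists x.
pose nxt n x := proj1_sig (constructive_indefinite_description _ (step' n x)).
have Hnxt n x : good n x -> agree n x (nxt n x) /\ good n.+1 (nxt n x).
  exact: (proj2_sig (constructive_indefinite_description _ (step' n x))).
have [x0 _] := Hex 0.
pose xs := fix xs n := if n is n'.+1 then nxt n' (xs n') else x0.
have gxs : forall n, good n (xs n).
  elim=> [|n IH] /=.
    by move=> m; have [x' Rx] := Hex m; exists x'; split=> // i.
  by case: (Hnxt n _ IH).
have axs : forall n m, n <= m -> agree n (xs n) (xs m).
  move=> n m; elim: m => [|m IH].
    by rewrite leqn0 => /eqP->.
  rewrite leq_eqVlt => /orP [/eqP->|hn] i hi //.
  rewrite IH //=; case: (Hnxt m _ (gxs m)) => A1 _; apply: A1.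
  by apply: leq_trans hi _.
exists (fun i => xs (absz i).+1 i) => n.
have [x' [a Rx]] := gxs n n.
apply: Hw Rx => i hi; rewrite -a //.
by symmetry; apply: (axs _ n hi); rewrite ltnSn.
Qed.
Lemma thpowS (A : finType) (theta : A -> seq A) lam k j' j a :
  (forall a, size (theta a) = lam) -> j < lam -> j' < lam ^ k ->
  thpow theta k.+1 (j' * lam + j) a =
  nth (thpow theta k j' a) (theta (thpow theta k j' a)) j.
Proof.
move=> Hs hj hj'; rewrite /thpow /spow iterS -/(spow theta k _).
rewrite (@nth_sapp _ theta lam _ _ _ _ Hs hj); last by rewrite (@size_spow _ theta lam _ _ Hs) muln1.
by apply: set_nth_default; rewrite Hs.
Qed.

Lemma isX_thetil (A : finType) (theta : A -> seq A) lam c M j :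
  (forall a, size (theta a) = lam) -> is_c_theta theta lam c ->
  isX theta lam c M -> j < lam ->
  isX theta lam c (thetil_j theta M j) /\
  {in M &, injective (fun a => nth a (theta a) j)}.
Proof.
move=> Hs [_ Hmin] [cM [k [j' [hk [hj' EM]]]]] hj.
have Eth : thetil_j theta M j = colset theta k.+1 (j' * lam + j).
  rewrite /thetil_j EM /colset -imset_comp; apply: eq_imset => a /=.
  by rewrite thpowS.
have hlt : j' * lam + j < lam ^ k.+1.
  rewrite expnSr; move: hj' hj; set P := lam ^ k => h1 h2; nia.
have Hc : #|thetil_j theta M j| = c.
  apply/eqP; rewrite eqn_leq; apply/andP; split.
    by rewrite -cM; apply: leq_imset_card.
  by rewrite Eth; apply: Hmin.
split.
  by split=> //; exists k.+1, (j' * lam + j).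
by apply/imset_injP; rewrite Hc cM.
Qed.

Lemma sortM_props (A : finType) (theta : A -> seq A) s0 k0 j0 (M : {set A}) :
  [/\ uniq (sortM theta s0 k0 j0 M), sortM theta s0 k0 j0 M =i M
    & size (sortM theta s0 k0 j0 M) = #|M|].
Proof.
rewrite /sortM; split.
- by rewrite sort_uniq enum_uniq.
- by move=> x; rewrite mem_sort mem_enum.
- by rewrite size_sort cardE.
Qed.
Lemma tau_facts (A : finType) (theta : A -> seq A) lam c a0 s0 k0 j0 M j :
  (forall a, size (theta a) = lam) -> is_c_theta theta lam c ->
  isX theta lam c M -> j < lam ->
  (forall n : 'I_c,
     e_ theta a0 s0 k0 j0 (thetil_j theta M j) (@tau _ theta c a0 s0 k0 j0 M j n) =
     nth (e_ theta a0 s0 k0 j0 M n) (theta (e_ theta a0 s0 k0 j0 M n)) j) /\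
  injective (@tau _ theta c a0 s0 k0 j0 M j).
Proof.
move=> Hs Hc HM hj.
have [[cM' _] Hinj] := isX_thetil Hs Hc HM hj.
have [cM _] := HM.
set M' := thetil_j theta M j.
have [u1 m1 s1] := sortM_props theta s0 k0 j0 M.
have [u2 m2 s2] := sortM_props theta s0 k0 j0 M'.
set e := e_ theta a0 s0 k0 j0.
have eM : forall n : 'I_c, e M n \in M.
  by move=> n; rewrite -m1 /e /e_ mem_nth // s1 cM.
have vM' : forall n : 'I_c, nth (e M n) (theta (e M n)) j \in M'.
  by move=> n; apply: imset_f.
have tv : forall n : 'I_c, val (@tau _ theta c a0 s0 k0 j0 M j n) =
    index (nth (e M n) (theta (e M n)) j) (sortM theta s0 k0 j0 M').
  move=> n; rewrite /tau insubdK // unfold_in /=; have := vM' n; by rewrite -m2 -index_mem s2 cM'.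
have He : forall n : 'I_c,
  e M' (@tau _ theta c a0 s0 k0 j0 M j n) = nth (e M n) (theta (e M n)) j.
  by move=> n; rewrite /e /e_ tv nth_index // m2 vM'.
split=> // n n' E.
have := congr1 (fun t : 'I_c => e M' t) E; rewrite !He => /Hinj.
move=> /(_ (eM n) (eM n')) /eqP; rewrite /e /e_ nth_uniq ?s1 ?cM //.
by move=> /eqP; apply: val_inj.
Qed.
Lemma sigma_tau (A : finType) (theta : A -> seq A) lam c a0 s0 k0 j0 M j :
  (forall a, size (theta a) = lam) -> is_c_theta theta lam c ->
  isX theta lam c M -> j < lam ->
  forall n : 'I_c, sigma theta c a0 s0 k0 j0 M j (@tau _ theta c a0 s0 k0 j0 M j n) = n.
Proof.
move=> Hs Hc HM hj.
have [_ tinj] := tau_facts a0 s0 k0 j0 Hs Hc HM hj.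
rewrite /sigma; case: pickP => [s /forallP Hs' | H0] n.
  by have /forallP/(_ n) := Hs' (@tau _ theta c a0 s0 k0 j0 M j n); rewrite eqxx => /eqP/eqP.
exfalso; move/negbT/negP: (H0 (perm tinj)^-1%g); apply.
apply/forallP => m; apply/forallP => n'; apply/eqP; apply/idP/idP => /eqP E.
  by rewrite -E -permE permKV.
have -> : m = perm tinj n' by rewrite permE.
by rewrite permK.
Qed.

Definition plet (A : finType) (theta : A -> seq A) c a0 s0 k0 j0 (z : 'I_c)
  (b : {perm 'I_c} * {set A}) : A :=
  e_ theta a0 s0 k0 j0 b.2 (val ((b.1^-1)%g z)).

Lemma plet_step (A : finType) (theta : A -> seq A) lam c a0 s0 k0 j0 z M j s :
  (forall a, size (theta a) = lam) -> is_c_theta theta lam c ->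
  isX theta lam c M -> j < lam ->
  plet theta a0 s0 k0 j0 z ((sigma theta c a0 s0 k0 j0 M j * s)%g, thetil_j theta M j) =
  nth (plet theta a0 s0 k0 j0 z (s, M)) (theta (plet theta a0 s0 k0 j0 z (s, M))) j.
Proof.
move=> Hs Hc HM hj; rewrite /plet /= invMg permM.
have [He _] := tau_facts a0 s0 k0 j0 Hs Hc HM hj.
rewrite -He; congr (e_ _ _ _ _ _ _ (val _)).
set n := (s^-1)%g z.
by rewrite -{1}(sigma_tau a0 s0 k0 j0 Hs Hc HM hj n) permK.
Qed.

Lemma plet_hat (A : finType) (theta : A -> seq A) lam c a0 s0 k0 j0 z b :
  (forall a, size (theta a) = lam) -> is_c_theta theta lam c ->
  isX theta lam c b.2 ->
  map (plet theta a0 s0 k0 j0 z) (@ThetaHat _ theta lam c a0 s0 k0 j0 b) =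
  theta (plet theta a0 s0 k0 j0 z b) /\
  (forall b', b' \in @ThetaHat _ theta lam c a0 s0 k0 j0 b -> isX theta lam c b'.2).
Proof.
case: b => s M Hs Hc /= HM; split.
  rewrite /ThetaHat -map_comp /=.
  set a := plet _ _ _ _ _ _ _.
  rewrite -[RHS](mkseq_nth a (theta a)) Hs /mkseq; apply/eq_in_map => j.
  rewrite mem_iota add0n => /andP [_ hj] /=.
  exact: plet_step.
move=> b' /mapP [j]; rewrite mem_iota add0n => /andP [_ hj] -> /=.
by have [] := isX_thetil Hs Hc HM hj.
Qed.
Lemma plet_spow (A : finType) (theta : A -> seq A) lam c a0 s0 k0 j0 z :
  (forall a, size (theta a) = lam) -> is_c_theta theta lam c ->
  forall k w, (forall b, b \in w -> isX theta lam c b.2) ->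
  map (plet theta a0 s0 k0 j0 z) (spow (@ThetaHat _ theta lam c a0 s0 k0 j0) k w) =
  spow theta k (map (plet theta a0 s0 k0 j0 z) w) /\
  (forall b, b \in spow (@ThetaHat _ theta lam c a0 s0 k0 j0) k w -> isX theta lam c b.2).
Proof.
move=> Hs Hc; elim=> [|k IH] w Hw //.
have [E1 E2] := IH w Hw.
rewrite /spow !iterS -/(spow _ k _) -/(spow _ k _).
set W := spow _ k w in E1 E2 *.
split.
  rewrite -E1 /sapp map_flatten -!map_comp; congr flatten.
  apply/eq_in_map => b hb /=; have [] := plet_hat a0 s0 k0 j0 z Hs Hc (E2 b hb).
  by [].
move=> b /flattenP [t /mapP [b' hb' ->] hbt].
by have [_ ] := plet_hat a0 s0 k0 j0 z Hs Hc (E2 b' hb'); apply.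
Qed.
Theorem mainTheorem17 (A : finType) (theta : A -> seq A) (lam c : nat)
  (a0 : A) (M0 : {set A}) (s0 : seq A) (k0 j0 : nat) :
  2 <= lam ->
  (forall a, size (theta a) = lam) ->
  primitive theta ->
  injective theta ->
  infinite_set (Xsubst theta) ->
  is_c_theta theta lam c ->
  a0 \in M0 -> isX theta lam c M0 ->
  nth a0 (theta a0) 0 = a0 -> thetil_j theta M0 0 = M0 ->
  uniq s0 -> s0 =i M0 -> head a0 s0 = a0 ->
  0 < k0 -> j0 < lam ^ k0 ->
  (forall a, a \in M0 -> thpow theta k0 j0 a = a) ->
  (forall M, isX theta lam c M -> nth M (spow (thetil theta lam) k0 [:: M]) j0 = M0) ->
  top_factor
    (Xsub (@ThetaHat A theta lam c a0 s0 k0 j0) (@hatAlph A theta lam c a0 s0 k0 j0))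
    (Xsubst theta).
Proof.
move=> _ Hs [p [hp Hp]] _ _ Hc a0M0 HM0 _ _ _ _ _ _ _ _ _.
have hc : 0 < c by case: HM0 => <- _; apply/card_gt0P; exists a0.
set z : 'I_c := Ordinal hc.
set pl := plet theta a0 s0 k0 j0 z.
set TH := @ThetaHat A theta lam c a0 s0 k0 j0.
have Hpl : forall k b, isX theta lam c b.2 ->
    map pl (spow TH k [:: b]) = spow theta k [:: pl b].
  move=> k b hb; have [] := plet_spow a0 s0 k0 j0 z Hs Hc k (w := [:: b]).
    by move=> b'; rewrite inE => /eqP->.
  by [].
exists (fun x i => pl (x i)); split.
- move=> x Hx i n; have [b [K [[_ hb] hinf]]] := Hx i n.
  exists (pl b), K; split=> //; rewrite -Hpl //.
  have -> : block (fun i => pl (x i)) i n = map pl (block x i n) by rewrite /block -map_comp.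
  exact: infix_map hinf.
- move=> y Hy.
  set bs := ((1%g : {perm 'I_c}), M0).
  have hbs : hatAlph theta lam a0 s0 k0 j0 bs by split=> //; exact: group1.
  pose R (m : nat) (x : int -> {perm 'I_c} * {set A}) :=
    (forall i : int, (absz i < m)%N -> pl (x i) = y i) /\
    (forall (i : int) (n : nat), (- m%:Z < i)%R -> (i + n%:Z <= m%:Z)%R ->
       exists b K, hatAlph theta lam a0 s0 k0 j0 b /\ infix (block x i n) (spow TH K [:: b])).
  have [x Hx] : exists x, forall m, R m x.
    apply: konig.
    + move=> m x x' ag [R1 R2]; split.
        by move=> i hi; rewrite -ag // R1.
      move=> i n h1 h2; have [b [K [hb hi]]] := R2 i n h1 h2.
      exists b, K; split=> //.
      have -> : block x' i n = block x i n.
        rewrite /block; apply/eq_in_map => k; rewrite mem_iota add0n => /andP [_ hk].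
        by rewrite ag //; lia.
      by [].
    + move=> m m' x hm [R1 R2]; split.
        by move=> i hi; apply: R1; lia.
      by move=> i n h1 h2; apply: R2; lia.
    + move=> m.
      have [b [K [_ hinf]]] := Hy (- m%:Z)%R (m.*2).
      have hb : b \in spow theta p [:: pl bs] := Hp _ _.
      have hinf2 : infix (block y (- m%:Z)%R m.*2) (map pl (spow TH (K + p) [:: bs])).
        rewrite Hpl; last by case: hbs.
        apply: infix_trans hinf _.
        by rewrite /spow iterD -/(spow theta p _); apply: infix_spow_mem.
      have [W hW eW] := @infix_map_inv _ _ pl _ _ hinf2.
      have sW : size W = m.*2 by rewrite -(size_map pl) eW size_map size_iota.
      exists (fun i => nth bs W (absz (i + m%:Z)%R)); split.
        move=> i hi /=.
        have hj : (absz (i + m%:Z)%R < size W)%N by rewrite sW; lia.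
        rewrite -(nth_map bs (pl bs)) // eW /block (nth_map 0%N); last by rewrite size_iota -sW.
        rewrite nth_iota -?sW // add0n; congr y; lia.
      move=> i n h1 h2.
      exists bs, (K + p); split=> //.
      apply: infix_trans hW.
      have -> : block (fun i => nth bs W (absz (i + m%:Z)%R)) i n =
                take n (drop (absz (i + m%:Z)%R) W).
        apply: (@eq_from_nth _ bs).
          rewrite size_map size_iota size_take size_drop sW.
          case: ifP => //; lia.
        move=> k; rewrite size_map size_iota => hk.
        rewrite (nth_map 0%N) ?size_iota // nth_iota // add0n nth_take // nth_drop.
        congr nth; lia.
      by apply: infix_trans (infix_take _ _) (infix_drop _ _).
  exists x.
    move=> i n; have [_ R2] := Hx (absz i + n).+1.
    apply: R2; lia.
  move=> i; have [R1 _] := Hx (absz i).+1; apply: R1; lia.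
- by [].
- move=> x _ n; exists (absz n) => y _ E; congr pl; apply: E; exact: leqnn.
Qed.
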